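(* In the standing setup with a single fluid, and with $t_{\mathrm b},\xi_{\mathrm b},\xi_0,t_0$ as in the time-interval setup, let $$b:=\max_{t\in[t_{\mathrm b},t_0]}\frac{\sqrt2\,|y_{\mathrm i}(t)|\,h(t)}{l}$$ and assume $b>0$. Then $$\Delta t_{\mathrm b0}\ \ge\ \frac{1}{2\sqrt{2\xi_0}}\,\frac{1}{b\,c\,l}\,(\xi_0-\xi_{\mathrm b}).$$
   Context: Standing setup. Fix real constants $c>0$ and $l>0$, a nonempty finite index set $A$, and constants $w_\alpha\in[-1,1]$ for $\alpha\in A$. Let $I\subseteq\mathbb{R}$ be an interval and let $x,y_{\mathrm r},y_{\mathrm i},h,z_\alpha$ ($\alpha\in A$) be real $C^1$ functions of $t\in I$ with $h>0$ and $z_\alpha\ge 0$. Define $\xi(t)=x(t)^2+\sum_{\beta\in A}\frac{1+w_\beta}{2}z_\beta(t)^2$. Assume that on $I$: $\dot x=\big[-x+4c\,y_{\mathrm r}y_{\mathrm i}+x\,\xi\big]h$, $\dot y_{\mathrm r}=\big[\xi\,y_{\mathrm r}-c\,x\,y_{\mathrm i}\big]h$, $\dot y_{\mathrm i}=\big[\xi\,y_{\mathrm i}+c\,x\,y_{\mathrm r}\big]h$, $\dot z_\alpha=\big[-\tfrac{1+w_\alpha}{2}+\xi\big]z_\alpha h$, $\dot h=-\xi h^2$, together with the constraints $x^2+4y_{\mathrm r}^2+\sum_{\beta\in A}z_\beta^2=1$ and $y_{\mathrm r}^2+y_{\mathrm i}^2=\frac{l^2}{2h^2}$. Single fluid: $A$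 has exactly one element; write $z$ and $w$ for $z_\alpha$ and $w_\alpha$. Time-interval setup: let $t_{\mathrm b}\in I$, $\xi_{\mathrm b}:=\xi(t_{\mathrm b})$, and let $\xi_0$ be a real number with $\xi_0>0$ and $\xi_{\mathrm b}\le\xi_0\le\frac{1+w}{2}$. Assume the set $\{t\in I:\ t\ge t_{\mathrm b},\ \xi(t)=\xi_0\}$ is nonempty and let $t_0$ be its minimum (so $\xi(t)\le\xi_0$ for all $t\in[t_{\mathrm b},t_0]$); put $\Delta t_{\mathrm b0}=t_0-t_{\mathrm b}$. (Physically, $\sqrt2\,|y_{\mathrm i}|h/l=|\cos(\phi/2f)|$, so $b$ measures the maximal displacement of the axion from the hilltop.) *)

(* Defs.v *)
From Stdlib Require Import Reals.
Open Scope R_scope.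

Definition is_interval (I : R -> Prop) : Prop :=
  forall a b c, I a -> I c -> a <= b -> b <= c -> I b.

Definition deriv_within (I : R -> Prop) (f : R -> R) (t d : R) : Prop :=
  limit1_in (fun s => (f s - f t) / (s - t)) (fun s => I s /\ s <> t) d t.

Definition cont_within (I : R -> Prop) (f : R -> R) (t : R) : Prop :=
  limit1_in f I (f t) t.

Definition C1_on (I : R -> Prop) (f : R -> R) : Prop :=
  exists f' : R -> R,
    (forall t, I t -> deriv_within I f t (f' t)) /\
    (forall t, I t -> cont_within I f' t).

Definition xi1 (w : R) (x z : R -> R) (t : R) : R :=
  x t ^ 2 + (1 + w) / 2 * z t ^ 2.

(* Main.v *)
Require Import Defs.
From Stdlib Require Import Reals Lra FunctionalExtensionality.
From Coquelicot Require Import Coquelicot.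
Open Scope R_scope.

Lemma deriv_cont I f t d : deriv_within I f t d -> cont_within I f t.
Proof.
 intros H eps He. destruct (H 1 Rlt_0_1) as [a [Ha Hs]].
 set (M := Rabs d + 1).
 assert (HM : 0 < M) by (unfold M; pose proof (Rabs_pos d); lra).
 exists (Rmin a (eps / M)). split.
 { apply Rmin_pos; [lra| apply Rdiv_lt_0_compat; lra]. }
 intros s [Is Ds]. simpl in *. unfold R_dist in *.
 destruct (Req_dec s t) as [->|Hst]. { rewrite Rminus_diag, Rabs_R0; lra. }
 assert (Hq := Hs s (conj (conj Is Hst) (Rlt_le_trans _ _ _ Ds (Rmin_l _ _)))).
 simpl in Hq; unfold R_dist in Hq.
 assert (Hd2 : Rabs (s - t) < eps / M) by (eapply Rlt_le_trans; [exact Ds| apply Rmin_r]).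
 replace (f s - f t) with ((f s - f t)/(s-t) * (s - t)) by (field; lra).
 rewrite Rabs_mult.
 assert (Hqq : Rabs ((f s - f t)/(s-t)) <= M).
 { replace ((f s - f t)/(s-t)) with (((f s - f t)/(s-t) - d) + d) by ring.
   pose proof (Rabs_triang ((f s - f t)/(s-t) - d) d). unfold M; lra. }
 assert (M * (eps/M) = eps) by (field; lra).
 pose proof (Rabs_pos ((f s - f t)/(s-t))). pose proof (Rabs_pos (s - t)). nra.
Qed.

Lemma deriv_interior I f a b t d : is_interval I -> I a -> I b -> a < t < b ->
  deriv_within I f t d -> derivable_pt_lim f t d.
Proof.
 intros HI Ia Ib Ht H eps He. destruct (H eps He) as [al [Hal Hs]].
 assert (P : 0 < Rmin al (Rmin (t - a) (b - t))).
 { apply Rmin_pos; [lra| apply Rmin_pos; lra]. }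
 exists (mkposreal _ P). intros h Hh Hlt. simpl in Hlt.
 pose proof (Rmin_l al (Rmin (t - a) (b - t))).
 pose proof (Rmin_r al (Rmin (t - a) (b - t))).
 pose proof (Rmin_l (t - a) (b - t)). pose proof (Rmin_r (t - a) (b - t)).
 assert (Hab : Rabs h < t - a /\ Rabs h < b - t) by lra.
 assert (Hh2 : - (t - a) < h < b - t) by (destruct Hab; split_Rabs; lra).
 assert (Is : I (t + h)) by (apply (HI a (t+h) b); auto; lra).
 assert (Hq := Hs (t + h)). simpl in Hq; unfold R_dist in Hq.
 replace (t + h - t) with h in Hq by ring.
 apply Hq. split. split; auto. lra. lra.
Qed.

Lemma derivable_pt_lim_ext_val f t u v : derivable_pt_lim f t u -> u = v -> derivable_pt_lim f t v.
Proof. intros H ->; exact H. Qed.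

Definition clamp a b s := Rmax a (Rmin b s).

Lemma clamp_in a b s : a <= b -> a <= clamp a b s <= b.
Proof. intros. unfold clamp, Rmax, Rmin. repeat destruct Rle_dec; lra. Qed.

Lemma clamp_id a b s : a <= s <= b -> clamp a b s = s.
Proof. intros. unfold clamp, Rmax, Rmin. repeat destruct Rle_dec; lra. Qed.

Lemma clamp_lip a b s y : a <= b -> Rabs (clamp a b s - clamp a b y) <= Rabs (s - y).
Proof. intros. unfold clamp, Rmax, Rmin. repeat destruct Rle_dec; split_Rabs; lra. Qed.

Lemma clamp_cont I f a b : a <= b -> (forall t, a <= t <= b -> I t) ->
  (forall t, a <= t <= b -> cont_within I f t) ->
  continuity (fun s => f (clamp a b s)).
Proof.
 intros Hab HI Hc y eps He.
 destruct (Hc (clamp a b y) (clamp_in a b y Hab) eps He) as [al [Hal Hs]].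
 exists al. split; auto. intros s [_ Ds]. simpl in *. unfold R_dist in *.
 apply Hs. split. apply HI, clamp_in; auto.
 simpl; unfold R_dist. eapply Rle_lt_trans; [apply clamp_lip; auto| exact Ds].
Qed.

Lemma local_agree f g a b c d : derivable_pt_lim f c d -> a < c < b ->
  (forall s, a < s < b -> g s = f s) -> derivable_pt_lim g c d.
Proof.
 intros H Hc E eps He. destruct (H eps He) as [del Hd].
 assert (P : 0 < Rmin del (Rmin (c - a) (b - c))).
 { apply Rmin_pos; [apply cond_pos| apply Rmin_pos; lra]. }
 exists (mkposreal _ P). intros h Hh Hlt. simpl in Hlt.
 pose proof (Rmin_l del (Rmin (c - a) (b - c))).
 pose proof (Rmin_r del (Rmin (c - a) (b - c))).
 pose proof (Rmin_l (c - a) (b - c)). pose proof (Rmin_r (c - a) (b - c)).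
 assert (Hh2 : - (c - a) < h < b - c) by (split_Rabs; lra).
 rewrite (E (c+h)) by lra. rewrite (E c) by lra. apply Hd; auto. lra.
Qed.

Lemma cont_const I a t : cont_within I (fun _ => a) t.
Proof. intros eps He. exists 1. split; [lra|]. intros. simpl. unfold R_dist. rewrite Rminus_diag, Rabs_R0; lra. Qed.
Lemma alg_bound X Yr Yi H Z k xi0 b c l :
  0 <= k <= 1 -> 0 < H -> 0 < c -> 0 < l -> 0 < xi0 ->
  X^2 + k*Z^2 <= xi0 -> X^2 + 4*Yr^2 + Z^2 = 1 ->
  sqrt 2 * Rabs Yi * H / l <= b ->
  2*X*((- X + 4*c*Yr*Yi + X*(X^2 + k*Z^2))*H) + k*(2*Z*((- k + (X^2 + k*Z^2))*Z*H))
   <= 2*sqrt (2*xi0)*b*c*l.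
Proof.
 intros Hk HH Hc Hl Hx Hxi K Hb.
 set (xi := X^2 + k*Z^2) in *.
 assert (E : 2*X*((- X + 4*c*Yr*Yi + X*xi)*H) + k*(2*Z*((- k + xi)*Z*H))
   = 2*H*(xi^2 - X^2 - k^2*Z^2) + 8*c*H*(X*Yr*Yi)) by (unfold xi; ring).
 rewrite E; clear E.
 assert (Hxi2 : xi^2 <= X^2 + k^2*Z^2).
 { set (u := X^2). set (v := Z^2).
   assert (u0 : 0 <= u) by (unfold u; nra). assert (v0 : 0 <= v) by (unfold v; nra).
   assert (uv : u + v <= 1) by (unfold u, v in *; nra).
   assert (Exi : xi = u + k*v) by (unfold xi, u, v; ring). rewrite Exi.
   replace (k^2*Z^2) with (k^2*v) by (unfold v; ring).
   assert ((u+k*v)^2 <= (u+v)*(u+k^2*v)).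
   { assert ((u+v)*(u+k^2*v) - (u+k*v)^2 = u*v*(1-k)^2) by ring.
     assert (0 <= u*v*(1-k)^2) by (apply Rmult_le_pos; [apply Rmult_le_pos; lra| nra]). lra. }
   assert (0 <= u + k^2*v) by nra. nra. }
 assert (P1 : 2*H*(xi^2 - X^2 - k^2*Z^2) <= 0) by nra.
 set (S := sqrt 2). set (Q := sqrt xi0).
 assert (HS : S*S = 2) by (apply sqrt_sqrt; lra).
 assert (HQ : Q*Q = xi0) by (apply sqrt_sqrt; lra).
 assert (S0 : 0 < S) by (apply sqrt_lt_R0; lra).
 assert (Q0 : 0 < Q) by (apply sqrt_lt_R0; lra).
 assert (E2 : sqrt (2*xi0) = S*Q) by (apply sqrt_mult; lra).
 rewrite E2.
 assert (AX : Rabs X <= Q).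
 { assert (Rabs X * Rabs X <= Q*Q).
   { rewrite <- Rabs_mult, HQ. rewrite Rabs_right by nra. assert (0 <= k*Z^2) by nra. unfold xi in Hxi. nra. }
   pose proof (Rabs_pos X). nra. }
 assert (AY : Rabs Yr <= 1/2).
 { assert (Rabs Yr * Rabs Yr <= 1/4).
   { rewrite <- Rabs_mult. rewrite Rabs_right by nra. nra. }
   pose proof (Rabs_pos Yr). nra. }
 assert (AI : Rabs Yi * H <= b*l*S/2).
 { assert (S * Rabs Yi * H <= b*l).
   { apply (Rmult_le_reg_r (/l)). apply Rinv_0_lt_compat; lra.
     replace (b*l*/l) with b by (field; lra). exact Hb. }
   assert (S*(S * Rabs Yi * H) <= S*(b*l)) by (apply Rmult_le_compat_l; lra).
   replace (S*(S * Rabs Yi * H)) with ((S*S)*(Rabs Yi*H)) in H1 by ring. rewrite HS in H1. lra. }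
 assert (XYY : X*Yr*Yi <= Rabs X * Rabs Yr * Rabs Yi).
 { rewrite <- !Rabs_mult. apply Rle_abs. }
 pose proof (Rabs_pos X). pose proof (Rabs_pos Yr). pose proof (Rabs_pos Yi).
 assert (Rabs X * Rabs Yr <= Q/2) by nra.
 assert (Rabs X * Rabs Yr * (Rabs Yi * H) <= Q/2 * (b*l*S/2)).
 { apply Rmult_le_compat; nra. }
 assert (H*(X*Yr*Yi) <= H*(Rabs X * Rabs Yr * Rabs Yi)) by (apply Rmult_le_compat_l; lra).
 assert (8*c*(H*(X*Yr*Yi)) <= 8*c*(Q/2 * (b*l*S/2))).
 { apply Rmult_le_compat_l; [lra|]. eapply Rle_trans; [eassumption|].
   replace (H * (Rabs X * Rabs Yr * Rabs Yi)) with (Rabs X * Rabs Yr * (Rabs Yi * H)) by ring. assumption. }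
 lra.
Qed.
Theorem lemma3
  (c l w : R) (I : R -> Prop) (x yr yi h z : R -> R)
  (tb xi0 t0 b : R)
  (Hc : 0 < c) (Hl : 0 < l) (Hw : -1 <= w <= 1)
  (HI : is_interval I)
  (Cx : C1_on I x) (Cyr : C1_on I yr) (Cyi : C1_on I yi)
  (Ch : C1_on I h) (Cz : C1_on I z)
  (Hh : forall t, I t -> 0 < h t)
  (Hz : forall t, I t -> 0 <= z t)
  (Dx : forall t, I t -> deriv_within I x t
     ((- x t + 4 * c * yr t * yi t + x t * xi1 w x z t) * h t))
  (Dyr : forall t, I t -> deriv_within I yr t
     ((xi1 w x z t * yr t - c * x t * yi t) * h t))
  (Dyi : forall t, I t -> deriv_within I yi t
     ((xi1 w x z t * yi t + c * x t * yr t) * h t))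
  (Dz : forall t, I t -> deriv_within I z t
     ((- ((1 + w) / 2) + xi1 w x z t) * z t * h t))
  (Dh : forall t, I t -> deriv_within I h t
     (- xi1 w x z t * h t ^ 2))
  (K1 : forall t, I t -> x t ^ 2 + 4 * yr t ^ 2 + z t ^ 2 = 1)
  (K2 : forall t, I t -> yr t ^ 2 + yi t ^ 2 = l ^ 2 / (2 * h t ^ 2))
  (Htb : I tb)
  (Hxi0 : 0 < xi0)
  (Hxib : xi1 w x z tb <= xi0)
  (Hxi0w : xi0 <= (1 + w) / 2)
  (Ht0 : I t0 /\ tb <= t0 /\ xi1 w x z t0 = xi0)
  (Ht0min : forall t, I t -> tb <= t -> xi1 w x z t = xi0 -> t0 <= t)
  (Hbmax : (exists s, tb <= s <= t0 /\ b = sqrt 2 * Rabs (yi s) * h s / l) /\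
           (forall s, tb <= s <= t0 -> sqrt 2 * Rabs (yi s) * h s / l <= b))
  (Hb : 0 < b) :
  t0 - tb >= 1 / (2 * sqrt (2 * xi0)) * (1 / (b * c * l)) * (xi0 - xi1 w x z tb).
Proof.
 destruct Ht0 as [It0 [Htbt0 Hxt0]].
 set (k := (1 + w) / 2).
 assert (Iab : forall s, tb <= s <= t0 -> I s).
 { intros s Hs. apply (HI tb s t0); tauto. }
 assert (Exi : xi1 w x z = fun s => x s * x s + k * (z s * z s)).
 { apply functional_extensionality; intro s; unfold xi1, k; ring. }
 assert (Cxi : forall t, I t -> cont_within I (xi1 w x z) t).
 { intros t It. rewrite Exi.
   pose proof (deriv_cont _ _ _ _ (Dx t It)) as C1.
   pose proof (deriv_cont _ _ _ _ (Dz t It)) as C2.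
   apply limit_plus; [apply limit_mul; assumption|].
   apply limit_mul; [apply cont_const|]. apply limit_mul; assumption. }
 set (G := fun s => xi1 w x z (clamp tb t0 s)).
 assert (CG : continuity G).
 { apply (clamp_cont I); auto. }
 assert (Gid : forall s, tb <= s <= t0 -> G s = xi1 w x z s).
 { intros s Hs. unfold G. rewrite clamp_id; auto. }
 assert (Bnd : forall s, tb <= s <= t0 -> xi1 w x z s <= xi0).
 { intros s Hs. destruct (Rle_dec (xi1 w x z s) xi0) as [|Hn]; auto. exfalso.
   assert (CF : continuity (G - fct_cte xi0)%F).
   { apply continuity_minus; auto. apply continuity_const. intros ? ?; reflexivity. }
   destruct (IVT_cor _ tb s CF (proj1 Hs)) as [z0 [Hz0 Ez0]].
   { unfold minus_fct, fct_cte. rewrite !Gid by lra. nra. }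
   unfold minus_fct, fct_cte in Ez0. rewrite Gid in Ez0 by lra.
   assert (t0 <= z0) by (apply Ht0min; [apply Iab; lra| lra| lra]).
   assert (z0 = s) by lra. subst z0. lra. }
 set (M := 2 * sqrt (2 * xi0) * b * c * l).
 assert (M0 : 0 < M).
 { unfold M. assert (0 < sqrt (2*xi0)) by (apply sqrt_lt_R0; lra).
   repeat apply Rmult_lt_0_compat; lra. }
 assert (Main : xi0 - xi1 w x z tb <= M * (t0 - tb)).
 { destruct (Req_dec tb t0) as [<-|Hne].
   { rewrite Hxt0. lra. }
   set (df := fun s => 2 * x s * ((- x s + 4 * c * yr s * yi s + x s * xi1 w x z s) * h s)
        + k * (2 * z s * ((- k + xi1 w x z s) * z s * h s))).
   pose proof (MVT_gen G tb t0 df) as HM. cbv zeta in HM.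
   rewrite Rmin_left, Rmax_right in HM by lra.
   destruct HM as [cc [Hcc Ecc]].
   - intros s Hs. apply is_derive_Reals.
     apply (local_agree (fun s => x s * x s + k * (z s * z s)) _ tb t0); [| lra |].
     + assert (dX := deriv_interior _ _ _ _ _ _ HI Htb It0 Hs (Dx s (Iab s ltac:(lra)))).
       assert (dZ := deriv_interior _ _ _ _ _ _ HI Htb It0 Hs (Dz s (Iab s ltac:(lra)))).
       assert (Hd := derivable_pt_lim_plus _ _ _ _ _ (derivable_pt_lim_mult _ _ _ _ _ dX dX)
          (derivable_pt_lim_mult _ _ _ _ _ (derivable_pt_lim_const k s)
             (derivable_pt_lim_mult _ _ _ _ _ dZ dZ))).
       unfold df. unfold plus_fct, mult_fct, fct_cte in Hd.
       eapply derivable_pt_lim_ext_val; [exact Hd|]. unfold k; ring.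

     + intros u Hu. rewrite Gid by lra. rewrite Exi. reflexivity.
   - intros s Hs. apply CG.
   - rewrite !Gid in Ecc by lra. rewrite Hxt0 in Ecc. rewrite Ecc.
     apply Rmult_le_compat_r; [lra|].
     assert (Is := Iab cc Hcc). unfold df, M.
     pose proof (Bnd cc Hcc) as Bc. unfold xi1 in Bc |- *. fold k in Bc |- *.
     pose proof (proj2 Hbmax cc Hcc) as Hb1.
     pose proof (K1 cc Is). apply alg_bound; auto; unfold k in *; lra. }
 assert (E : 1 / (2 * sqrt (2 * xi0)) * (1 / (b * c * l)) * (xi0 - xi1 w x z tb)
   = (xi0 - xi1 w x z tb) / M).
 { unfold M. assert (0 < sqrt (2*xi0)) by (apply sqrt_lt_R0; lra). field. repeat split; lra. }
 rewrite E. apply Rle_ge. apply Rle_div_l; auto. lra.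
Qed.
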